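(* Let $M$ be a finite abelian group of odd order and exponent greater than $2$. Then $(K,1)=\{(A,1):A\in K\}$ is the only subloop of $L_M$ of order $4$.
   Context: Let $K=\{1,a,b,c\}$ be the Klein four-group. Set $L_M=K\times M$ with the operation $(A,x)*(B,y)=(AB,xy)$ if $B=1$, and $(A,x)*(B,y)=(AB,x^{-1}y)$ if $B\neq 1$. *)

(* Defs.v *)
From mathcomp Require Import all_boot all_fingroup all_solvable.
Set Implicit Arguments. Unset Strict Implicit. Unset Printing Implicit Defensive.
Local Open Scope group_scope.

(* The Klein four-group K, modelled as bool * bool with componentwise xor;
   identity 1 = (false, false). *)
Definition K := (bool * bool)%type.
Definition K1 : K := (false, false).
Definition Kmul (A B : K) : K := (A.1 (+) B.1, A.2 (+) B.2).

(* The loop L_M = K x M with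
   (A,x)*(B,y) = (AB, xy) if B = 1, and (AB, x^-1 y) if B <> 1.
   M is represented by the carrier of the finite group gT. *)
Definition Lmul (gT : finGroupType) (u v : K * gT) : K * gT :=
  if v.1 == K1 then (Kmul u.1 v.1, u.2 * v.2)
  else (Kmul u.1 v.1, u.2^-1 * v.2).

Definition Lone (gT : finGroupType) : K * gT := (K1, 1).

(* A subloop: a subset containing the identity, closed under the product
   and under left and right division (solutions of a*x = b and y*a = b). *)
Definition subloop (gT : finGroupType) (S : {set K * gT}) : Prop :=
  [/\ Lone gT \in S,
      (forall a b, a \in S -> b \in S -> Lmul a b \in S),
      (forall a b x, a \in S -> b \in S -> Lmul a x = b -> x \in S) &
      (forall a b y, a \in S -> b \in S -> Lmul y a = b -> y \in S)].

(* Main.v *)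
Require Import Defs.
From mathcomp Require Import all_boot all_fingroup all_solvable.
Local Open Scope group_scope.

Lemma sq1 (gT : finGroupType) (x : gT) :
  odd #|[set: gT]| -> x ^+ 2 = 1 -> x = 1.
Proof.
move=> Hodd Hx; apply/eqP; rewrite -order_eq1 -dvdn1.
have h1 : (#[x] %| 2)%N by rewrite order_dvdn Hx.
have h2 : (#[x] %| #|[set: gT]|)%N by apply: (@order_dvdG _ [set: gT]%G); rewrite inE.
have := coprime2n #|[set: gT]|; rewrite Hodd /coprime => /eqP <-.
by rewrite dvdn_gcd h1 h2.
Qed.

Arguments sq1 {gT x}.

Lemma card5 (T : finType) (S : {set T}) a b c d e :
  uniq [:: a; b; c; d; e] -> a \in S -> b \in S -> c \in S -> d \in S ->
  e \in S -> #|S| = 4 -> False.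
Proof.
move=> Hu Ha Hb Hc Hd He HS.
have Hs : {subset [:: a; b; c; d; e] <= enum S}.
  by move=> z; rewrite mem_enum !inE => /orP [/eqP ->|/orP [/eqP ->|/orP [/eqP ->|/orP [/eqP ->|/eqP ->]]]].
by have := uniq_leq_size Hu Hs; rewrite -cardE HS.
Qed.

Theorem corollary4p5 (gT : finGroupType) :
  abelian [set: gT] -> odd #|[set: gT]| -> (2 < exponent [set: gT])%N ->
  forall S : {set K * gT}, subloop S -> #|S| = 4 ->
    S = [set (A, 1) | A : K].
Proof.
move=> Hab Hodd _ S [H1 Hmul Hld Hrd] HS.
have Hc : forall x y : gT, x * y = y * x.
  by move=> x y; apply: (centsP Hab); rewrite inE.
have KmulK1 : forall A, Kmul A K1 = A by case=> [] [] [].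
have K1mul : forall A, Kmul K1 A = A by case=> [] [] [].
have KmulAA : forall A, Kmul A A = K1 by case=> [] [] [].
suff Hall : forall A x, (A, x) \in S -> x = 1.
  apply/eqP; rewrite eqEcard; apply/andP; split.
    apply/subsetP=> [[A x]] /[dup] /Hall -> _.
    by apply/imsetP; exists A.
  rewrite HS card_imset; first by rewrite card_prod card_bool.
  by move=> A B [].
case: (boolP [exists y : gT, (y != 1) && ((K1, y) \in S)]).
  case/existsP=> y /andP [ny1 Hy].
  case: (boolP [exists p in S, p.1 != K1]).
    case/existsP=> [[A x]] /andP [HAx /= nA]; exfalso.
    have E1 := Hmul _ _ HAx Hy.
    have E2 := Hmul _ _ Hy HAx.
    rewrite /Lmul /= ?eqxx (negbTE nA) ?KmulK1 ?K1mul in E1 E2.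
    apply: (@card5 _ S _ _ _ _ _ _ H1 Hy HAx E1 E2 HS).
    rewrite /= !inE /Lone !xpair_eqE /= (eq_sym K1 A) (negbTE nA) /= !eqxx /= !andbT.
    rewrite orbF (eq_sym 1 y) ny1 /=.
    have -> : (x == x * y) = false.
      by apply/negbTE; apply: contra ny1 => /eqP /(congr1 (mulg x^-1)); rewrite mulKg mulVg => <-.
    have -> : (x == y^-1 * x) = false.
      apply/negbTE; apply: contra ny1 => /eqP /(congr1 (mulg^~ x^-1)); rewrite mulgK mulgV.
      by move/(congr1 invg); rewrite invgK invg1 => <-.
    rewrite /= (Hc _ x) (inj_eq (mulgI x)).
    apply/eqP=> Eyy; move/eqP: ny1; apply.
    apply: (sq1 Hodd).
    by rewrite expgS expg1 {1}Eyy mulVg.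
  rewrite negb_exists_in => /forallP Hfst; exfalso.
  have Hf : forall p, p \in S -> p.1 = K1.
    by move=> p Hp; have := Hfst p; rewrite Hp /= negbK => /eqP.
  pose G := [set x | (K1, x) \in S].
  have gG : group_set G.
    apply/group_setP; split; first by rewrite inE.
    move=> u v; rewrite !inE => Hu Hv.
    by have := Hmul _ _ Hu Hv; rewrite /Lmul /= ?eqxx ?K1mul.
  have HG : #|G| = 4.
    rewrite -HS.
    have -> : G = [set p.2 | p in S].
      apply/setP=> x; rewrite inE; apply/idP/imsetP.
        by move=> Hx; exists (K1, x).
      by case=> p Hp ->; rewrite -(Hf p Hp); case: p Hp.
    apply: card_in_imset => p q Hp Hq Epq.
    by case: p q Hp Hq Epq => [? ?] [? ?] /Hf /= -> /Hf /= -> /= ->.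
  have := cardSg (subsetT (Group gG)); rewrite /= HG => H4.
  have : (2 %| #|[set: gT]|)%N by apply: dvdn_trans H4.
  by rewrite dvdn2 Hodd.
rewrite negb_exists => /forallP Hno.
have HK1 : forall y, (K1, y) \in S -> y = 1.
  by move=> y Hy; have := Hno y; rewrite Hy andbT negbK => /eqP.
have U : forall C u v, (C, u) \in S -> (C, v) \in S -> u = v.
  move=> C u v Hu Hv.
  case: (eqVneq C K1) => [EC|nC].
    by rewrite EC in Hu Hv; rewrite (HK1 _ Hu) (HK1 _ Hv).
  have := Hmul _ _ Hu Hv; rewrite /Lmul /= (negbTE nC) KmulAA => /HK1 E.
  by apply: (mulgI u^-1); rewrite E mulVg.
have L : forall A B x y, A != K1 -> B != K1 -> A != B ->
    (A, x) \in S -> (B, y) \in S -> x = y.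
  move=> A B x y nA nB nAB Hx Hy.
  have E1 := Hmul _ _ Hx Hy; have E2 := Hmul _ _ Hy Hx.
  rewrite /Lmul /= (negbTE nA) (negbTE nB) in E1 E2.
  have EK : Kmul B A = Kmul A B by rewrite /Kmul addbC [B.2 (+) _]addbC.
  rewrite EK in E2.
  have E := U _ _ _ E1 E2.
  have : (x^-1 * y) ^+ 2 = 1.
    by rewrite expgS expg1 {2}E mulgA -(mulgA x^-1) mulgV mulg1 mulVg.
  by move/(sq1 Hodd)/eqP; rewrite -(inj_eq (mulgI x)) mulKVg mulg1 => /eqP.
have Hsurj : forall B, exists y, (B, y) \in S.
  have Himg : [set p.1 | p in S] = setT.
    apply/eqP; rewrite eqEcard subsetT /= cardsT card_prod card_bool.
    rewrite card_in_imset ?HS //.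
    by move=> [a u] [b v] Hp Hq /= Eab; rewrite Eab in Hp; rewrite (U _ _ _ Hp Hq) Eab.
  move=> B; have : B \in [set p.1 | p in S] by rewrite Himg inE.
  by case/imsetP=> p Hp ->; exists p.2; case: p Hp.
move=> A x HAx.
case: (eqVneq A K1) => [EA|nA]; first by rewrite EA in HAx; apply: HK1.
have [B [nB nAB nC]] : exists B, [/\ B != K1, A != B & Kmul A B != K1 /\ Kmul A B != A].
  move: nA; case: A {HAx} => [[] []] nA0;
    [by exists (true, false) | by exists (false, true) | by exists (true, false) | by case/negP: nA0].
case: nC => nC1 nCA.
have [y Hy] := Hsurj B.
have Exy := L _ _ _ _ nA nB nAB HAx Hy.
rewrite -Exy in Hy.
have := Hmul _ _ HAx Hy; rewrite /Lmul /= (negbTE nB) mulVg => HC.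
by apply: (L _ _ _ _ nA nC1 _ HAx HC); rewrite eq_sym.
Qed.
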